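(* Let $B$ be a $p\times q$ matrix, $G$ a $q\times q$ symmetric matrix and $G'$ a $p\times p$ symmetric matrix. Let $$A=\begin{bmatrix} G' & B & B\\ B^T & 0 & G\\ B^T & G & 0\end{bmatrix}\quad ((p+2q)\times(p+2q)),\qquad C=\begin{bmatrix} G & B^T & B^T\\ B & 0 & G'\\ B & G' & 0\end{bmatrix}\quad ((2p+q)\times(2p+q)).$$ Then $A\oplus\begin{bmatrix}0 & G'\\ G' & 0\end{bmatrix}\oplus G$ and $C\oplus\begin{bmatrix}0 & G\\ G & 0\end{bmatrix}\oplus G'$ are cospectral.
   Context: For matrices $X,Y$, $X\oplus Y=\begin{bmatrix} X&0\\0&Y\end{bmatrix}$, and $0$ denotes a zero matrix of appropriate size. Two square matrices are cospectral if they have the same eigenvalues with the same multiplicities. *)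

(* Defs.v *)
From HB Require Import structures.
From mathcomp Require Import all_boot all_order all_algebra.
From mathcomp Require Import reals.
Set Implicit Arguments. Unset Strict Implicit. Unset Printing Implicit Defensive.
Import GRing.Theory Num.Theory.
Local Open Scope ring_scope.

Definition dsum (R : pzRingType) (m n : nat) (X : 'M[R]_m) (Y : 'M[R]_n)
  : 'M[R]_(m + n) := block_mx X 0 0 Y.

(* Used for real symmetric matrices, whose eigenvalues are all real. *)
Definition cospectral (R : realType) (n m : nat) (X : 'M[R]_n) (Y : 'M[R]_m) : Prop :=
  n = m /\ forall x : R, mup x (char_poly X) = mup x (char_poly Y).

(* Main.v *)
Require Import Defs.
From HB Require Import structures.
From mathcomp Require Import all_boot all_order all_algebra.
From mathcomp Require Import reals.
From mathcomp Require Import ring zify.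
Set Implicit Arguments. Unset Strict Implicit. Unset Printing Implicit Defensive.
Import GRing.Theory Num.Theory.
Local Open Scope ring_scope.

Section S.
Variable R : realType.

Lemma cp_block m n (X : 'M[R]_m) (Y : 'M[R]_n) :
  char_poly (block_mx X 0 0 Y) = char_poly X * char_poly Y.
Proof. by rewrite /char_poly char_block_diag_mx det_ublock. Qed.

Lemma cp_sim m n (e : m = n) (X : 'M[R]_m) (Y : 'M[R]_n) (S : 'M[R]_(m,n))
  (T : 'M[R]_(n,m)) (c : R) : c != 0 -> S *m T = c%:M -> X *m S = S *m Y ->
  char_poly X = char_poly Y.
Proof.
case: n / e Y S T => Y S T c0 ST XS.
have dS : \det S != 0.
  apply/negP => /eqP d0; move: (f_equal determinant ST).
  rewrite det_mulmx d0 mul0r det_scalar => /esym/eqP.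
  by rewrite expf_eq0 (negPf c0) andbF.
pose S' := map_mx (@polyC R) S.
have E : char_poly_mx X *m S' = S' *m char_poly_mx Y.
  rewrite /char_poly_mx mulmxBl mulmxBr -map_mxM XS map_mxM.
  by rewrite mul_scalar_mx mul_mx_scalar.
have : char_poly X * \det S' = \det S' * char_poly Y.
  by rewrite /char_poly -!det_mulmx E.
rewrite det_map_mx mulrC => /mulfI; apply.
by rewrite polyC_eq0.
Qed.

Lemma cp_cast m n (e1 e2 : m = n) (X : 'M[R]_m) :
  char_poly (castmx (e1, e2) X) = char_poly X.
Proof. by case: n / e1 e2 => e2; rewrite castmx_id. Qed.

Ltac msimp := rewrite ?(mulmx1, mul1mx, mul0mx, mulmx0, add0r, addr0, mulmxN, mulNmx, opprK, subrr, oppr0).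

Lemma two_mx n : (1%:M : 'M[R]_n) + 1%:M = 2%:M.
Proof. by rewrite -raddfD. Qed.

Lemma cp_K n (H : 'M[R]_n) :
  char_poly (block_mx 0 H H 0) = char_poly H * char_poly (-H).
Proof.
rewrite -cp_block.
pose P := block_mx (1%:M : 'M[R]_n) 1%:M 1%:M (-1%:M).
apply: (cp_sim (erefl _) (S := P) (T := P) (c := 2)).
- by rewrite pnatr_eq0.
- rewrite /P mulmx_block; msimp; rewrite two_mx (scalar_mx_block n n).
  done.
- rewrite /P !mulmx_block; msimp; done.
Qed.

Lemma cp_swap m n (a : 'M[R]_m) b c (d : 'M[R]_n) :
  char_poly (block_mx a b c d) = char_poly (block_mx d c b a).
Proof.
apply: (cp_sim (addnC m n) (S := block_mx 0 1%:M 1%:M 0) (T := block_mx 0 1%:M 1%:M 0) (c := 1)).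
- exact: oner_neq0.
- by rewrite mulmx_block; msimp; rewrite -scalar_mx_block.
- by rewrite !mulmx_block; msimp.
Qed.

Lemma cp_scale m n (a : 'M[R]_m) (b : 'M[R]_(m, n)) c (d : 'M[R]_n) :
  char_poly (block_mx a b (c *+ 2) d) = char_poly (block_mx a (b *+ 2) c d).
Proof.
apply: (cp_sim (erefl _) (S := block_mx 1%:M 0 0 2%:M) (T := block_mx 2%:M 0 0 1%:M) (c := 2)).
- by rewrite pnatr_eq0.
- by rewrite mulmx_block; msimp; rewrite -scalar_mx_block.
- rewrite !mulmx_block; msimp.
  by rewrite !mul_mx_scalar !mul_scalar_mx !scaler_nat.
Qed.

Lemma cp_A m n (D : 'M[R]_m) (E : 'M[R]_(m,n)) (F : 'M[R]_(n,m)) (H : 'M[R]_n) :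
  char_poly (block_mx D (row_mx E E) (col_mx F F) (block_mx 0 H H 0))
  = char_poly (block_mx D (E *+ 2) F H) * char_poly (-H).
Proof.
pose P := block_mx (1%:M : 'M[R]_n) 1%:M 1%:M (-1%:M).
have -> : char_poly (block_mx D (row_mx E E) (col_mx F F) (block_mx 0 H H 0))
  = char_poly (block_mx D (row_mx (E *+ 2) 0) (col_mx F 0) (block_mx H 0 0 (-H))).
  apply: (cp_sim (erefl _) (S := block_mx 1%:M 0 0 P) (T := block_mx 2%:M 0 0 P) (c := 2)).
  - by rewrite pnatr_eq0.
  - rewrite mulmx_block; msimp; rewrite /P mulmx_block; msimp.
    by rewrite !two_mx -!scalar_mx_block.
  - rewrite !mulmx_block; msimp; rewrite /P.
    rewrite mul_row_block mul_block_col; msimp.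
    by rewrite mulr2n.
rewrite block_mxA; etransitivity; first exact: cp_cast.
by rewrite row_mx0 col_mx0 cp_block.
Qed.
End S.

Theorem theorem3p8 (R : realType) (p q : nat)
  (B : 'M[R]_(p, q)) (G : 'M[R]_q) (G' : 'M[R]_p)
  (HG : G^T = G) (HG' : G'^T = G') :
  let A : 'M[R]_(p + (q + q)) :=
    block_mx G' (row_mx B B) (col_mx B^T B^T) (block_mx 0 G G 0) in
  let C : 'M[R]_(q + (p + p)) :=
    block_mx G (row_mx B^T B^T) (col_mx B B) (block_mx 0 G' G' 0) in
  cospectral (dsum (dsum A (block_mx 0 G' G' 0)) G)
             (dsum (dsum C (block_mx 0 G G 0)) G').
Proof.
move=> A C; split; first lia.
move=> x; congr mup.
rewrite /dsum /A /C !cp_block !cp_A !cp_K.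
rewrite (cp_swap G) cp_scale.
ring.
Qed.
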